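(* Let $A\in\mathbf{R}^{n\times n}$, $C_i\in\mathbf{R}^{m_i\times n}$ ($i=1,\ldots,N$), $H\in\mathbf{R}^{p\times n}$ with $(H,A)$ observable, and let $\mathcal{L}$ be the Laplacian of a directed graph on $N$ nodes which has a spanning tree. Set $\bar A=I_N\otimes A$, $\bar C=\mathrm{diag}[C_1,\ldots,C_N]$, $\bar H=\mathcal{L}\otimes H$. If $\bigcap_{i=1}^N\mathcal{C}_i=\{0\}$, where $\mathcal{C}_i$ is the undetectable subspace of $(C_i,A)$, then the pair $\left(\begin{bmatrix}\bar C\\ \bar H\end{bmatrix},\bar A\right)$ is detectable.
   Context: Directed graph on $\{1,\ldots,N\}$ without self-loops; adjacency matrix $\mathbf{A}=[\mathbf{a}_{ij}]$ with $\mathbf{a}_{ij}=1$ if there is an edge from $j$ to $i$, else $0$; $p_i$ the in-degree of node $i$; Laplacian $\mathcal{L}=\mathrm{diag}[p_1,\ldots,p_N]-\mathbf{A}$. A spanning tree is a directed tree containing all nodes, rooted at a node from which every node is reachable by a directed path. For a square matrix $F$ with minimal polynomial $\alpha_F=\alpha_F^-\alpha_F^+$ (zeros of $\alpha_F^-$ in the open left half-plane, of $\alpha_F^+$ in the closed right half-plane), the undetectable subspace of $(G,F)$ is $\bigcap_{l=1}^n\operatorname{Ker}(GF^{l-1})\cap\operatorname{Ker}\alpha_F^+(F)$; the pair is detectable iff this subspace is $\{0\}$. *)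

(* Defs.v *)
From HB Require Import structures.
From mathcomp Require Import all_boot all_order all_algebra.
From mathcomp Require Import complex mxtens.
From mathcomp Require Import reals.
Set Implicit Arguments.
Unset Strict Implicit.
Unset Printing Implicit Defensive.
Import Order.TTheory GRing.Theory Num.Theory.
Local Open Scope ring_scope.

(* A directed graph on the N nodes 'I_N is a relation [e : rel 'I_N];
   [e j i] means there is an edge from j to i. *)
Definition no_self_loops N (e : rel 'I_N) : Prop := forall i, ~~ e i i.

Definition adjacency (R : pzRingType) N (e : rel 'I_N) : 'M[R]_N :=
  \matrix_(i, j) (e j i)%:R.

Definition indeg (R : pzRingType) N (e : rel 'I_N) (i : 'I_N) : R :=
  \sum_(j < N) adjacency R e i j.

Definition laplacian (R : pzRingType) N (e : rel 'I_N) : 'M[R]_N :=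
  diag_mx (\row_i indeg R e i) - adjacency R e.

(* It is given by a parent map [par]: every non-root node i has the tree
   edge (par i -> i) in the graph, and following parents from any node
   reaches the root (so the parent structure is acyclic, i.e. a tree). *)
Definition has_spanning_tree N (e : rel 'I_N) : Prop :=
  exists (r : 'I_N) (par : 'I_N -> 'I_N),
    (forall i, i != r -> e (par i) i) /\
    (forall i, exists k, iter k par i = r).

(* minimal polynomial of a square matrix (the 0x0 matrix has minimal
   polynomial 1) *)
Definition minpoly (F : fieldType) (n : nat) : 'M[F]_n -> {poly F} :=
  match n return 'M[F]_n -> {poly F} with
  | 0 => fun _ => 1
  | n'.+1 => fun A => mxminpoly A
  end.

(* evaluation q(F) = \sum_k q_k F^k of a polynomial at a square matrix
   (valid for every size n, including n = 0) *)
Definition peval_mx (K : comNzRingType) n (q : {poly K}) (F : 'M[K]_n) : 'M[K]_n :=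
  \sum_(k < size q) q`_k *: F ^+ k.

Section Unstable.
Variable R : realType.
Local Notation C := (R[i]).

Definition cplx_mx m n (M : 'M[R]_(m, n)) : 'M[C]_(m, n) :=
  map_mx (fun x : R => x%:C%C) M.

Definition minpolyC n (F : 'M[R]_n) : {poly C} :=
  map_poly (fun x : R => x%:C%C) (minpoly F).

(* its zeros, listed with multiplicity: alpha_F = \prod_(z <- r) ('X - z) *)
Definition minpoly_roots n (F : 'M[R]_n) : seq C :=
  sval (closed_field_poly_normal (minpolyC F)).

Definition alpha_plus n (F : 'M[R]_n) : {poly C} :=
  \prod_(z <- minpoly_roots F | 0 <= complex.Re z) ('X - z%:P).

Definition undetectable q n (G : 'M[R]_(q, n)) (F : 'M[R]_n)
    (x : 'cV[R]_n) : Prop :=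
  (forall l : nat, (l < n)%N -> G *m (F ^+ l) *m x = 0) /\
  peval_mx (alpha_plus F) (cplx_mx F) *m cplx_mx x = 0.

Definition detectable q n (G : 'M[R]_(q, n)) (F : 'M[R]_n) : Prop :=
  forall x, undetectable G F x -> x = 0.

Definition observable q n (G : 'M[R]_(q, n)) (F : 'M[R]_n) : Prop :=
  forall x : 'cV[R]_n,
    (forall l : nat, (l < n)%N -> G *m (F ^+ l) *m x = 0) -> x = 0.

End Unstable.

Definition blockdiag (R : pzRingType) N n (m : 'I_N -> nat)
    (Cs : forall i : 'I_N, 'M[R]_(m i, n)) : 'M[R]_(\sum_(i < N) m i, N * n) :=
  \mxcol_(i < N)
    (\matrix_(r < m i, c < N * n)
       (if (mxtens_unindex c).1 == i then Cs i r (mxtens_unindex c).2 else 0)).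

(* Main.v *)
Require Import Defs.
From HB Require Import structures.
From mathcomp Require Import all_boot all_order all_algebra.
From mathcomp Require Import complex mxtens.
From mathcomp Require Import reals.
Import Order.TTheory GRing.Theory Num.Theory.
Local Open Scope ring_scope.
Set Implicit Arguments.
Unset Strict Implicit.
Unset Printing Implicit Defensive.

Lemma sum_tens (V : nmodType) N n (F : 'I_(N * n) -> V) :
  \sum_(k < N * n) F k = \sum_(i < N) \sum_(j < n) F (mxtens_index (i, j)).
Proof.
rewrite pair_big /= (reindex (@mxtens_index N n)) /=.
  by apply: eq_bigr => -[i j].
by exists (@mxtens_unindex N n) => k _; rewrite (mxtens_indexK, mxtens_unindexK).
Qed.

Definition blk (K : Type) N n (x : 'cV[K]_(N * n)) (j : 'I_N) : 'cV[K]_n :=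
  \col_c x (mxtens_index (j, c)) 0.

Lemma blk_tens (K : comPzRingType) N' N q n (M : 'M[K]_(N', N)) (B : 'M[K]_(q, n))
   (x : 'cV[K]_(N * n)) i :
  blk ((M *t B) *m x) i = \sum_j M i j *: (B *m blk x j).
Proof.
apply/matrixP => r z; rewrite !mxE summxE sum_tens; apply: eq_bigr => j _.
rewrite !mxE mulr_sumr; apply: eq_bigr => c _.
by rewrite tensmxE !mxE mulrA.
Qed.

Lemma blk_tens1 (K : comPzRingType) N q n (B : 'M[K]_(q, n))
   (x : 'cV[K]_(N * n)) i :
  blk (((1%:M : 'M_N) *t B) *m x) i = B *m blk x i.
Proof.
rewrite blk_tens (bigD1 i) //= big1 => [|j /negbTE Hj]; last by rewrite mxE eq_sym Hj scale0r.
by rewrite mxE eqxx scale1r addr0.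
Qed.

Lemma blk_eq0 (K : nmodType) N n (x : 'cV[K]_(N * n)) :
  (forall j, blk x j = 0) -> x = 0.
Proof.
move=> H; apply/matrixP => k z; rewrite [z]ord1.
case: (mxtens_indexP k) => i j.
by have := congr1 (fun M : 'cV[K]_n => M j 0) (H i); rewrite !mxE.
Qed.

Lemma blk0 (K : nmodType) N n j : blk (0 : 'cV[K]_(N * n)) j = 0.
Proof. by apply/matrixP => r z; rewrite !mxE. Qed.

Lemma tens11 (K : pzRingType) N n :
  (1%:M : 'M[K]_N) *t (1%:M : 'M[K]_n) = 1%:M.
Proof.
apply/matrixP => a b.
case: (mxtens_indexP a) => i j; case: (mxtens_indexP b) => k l.
rewrite tensmxE !mxE.
rewrite (inj_eq (can_inj (@mxtens_indexK N n))) xpair_eqE.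
by case: (i == k); case: (j == l); rewrite /= ?mulr1n ?mulr0n ?mul1r ?mul0r.
Qed.

Lemma tens1_exp (K : comPzRingType) N n (F : 'M[K]_n) k :
  ((1%:M : 'M[K]_N) *t F) ^+ k = (1%:M : 'M_N) *t (F ^+ k).
Proof.
elim: k => [|k IH]; first by rewrite !expr0 tens11.
by rewrite !exprS IH -!mulmxE tensmx_mul mul1mx.
Qed.

Lemma tensmx_sumr (K : comPzRingType) m1 n1 m2 n2 (M : 'M[K]_(m1, n1)) (I : Type)
  (r : seq I) (P : pred I) (G : I -> 'M[K]_(m2, n2)) :
  M *t (\sum_(k <- r | P k) G k) = \sum_(k <- r | P k) (M *t G k).
Proof.
apply/matrixP => a b; rewrite !mxE !summxE mulr_sumr; apply: eq_bigr => k _.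
by rewrite !mxE.
Qed.

Lemma tensmxZr (K : comPzRingType) m1 n1 m2 n2 (M : 'M[K]_(m1, n1)) c
  (G : 'M[K]_(m2, n2)) : M *t (c *: G) = c *: (M *t G).
Proof. by apply/matrixP => a b; rewrite !mxE mulrCA. Qed.

Lemma peval_tens1 (K : comNzRingType) N n (q : {poly K}) (F : 'M[K]_n) :
  peval_mx q ((1%:M : 'M_N) *t F) = (1%:M : 'M_N) *t peval_mx q F.
Proof.
rewrite /peval_mx tensmx_sumr; apply: eq_bigr => k _.
by rewrite tens1_exp tensmxZr.
Qed.

Lemma peval_horner (K : comNzRingType) k (A : 'M[K]_k.+1) (p : {poly K}) :
  peval_mx p A = horner_mx A p.
Proof.
have inj : injective (fun a : K => (a%:M : 'M[K]_k.+1)).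
  move=> a b Hab; have := congr1 (fun M : 'M[K]_k.+1 => M ord0 ord0) Hab.
  by rewrite !mxE eqxx !mulr1n.
have z0 : (0%:M : 'M[K]_k.+1) = 0 by apply/matrixP => i j; rewrite !mxE mul0rn.
rewrite /horner_mx /horner_morph horner_coef (size_map_inj_poly inj z0).
apply: eq_bigr => i _; rewrite coef_map /= -mulmxE mul_scalar_mx //.
Qed.

Lemma minpoly_spec (K : fieldType) k (F : 'M[K]_k) : (0 < k)%N ->
  [/\ minpoly F \is monic, peval_mx (minpoly F) F = 0 &
      forall p, peval_mx p F = 0 -> minpoly F %| p].
Proof.
case: k F => // k F _ /=; rewrite !peval_horner; split.
- exact: mxminpoly_monic.
- exact: mx_root_minpoly.
- by move=> p; rewrite peval_horner; apply: mxminpoly_min.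
Qed.

Lemma tens1_eq0 (K : pzRingType) N n (X : 'M[K]_n) : (0 < N)%N ->
  (1%:M : 'M[K]_N) *t X = 0 -> X = 0.
Proof.
case: N => // N _ H; apply/matrixP => a b.
have := congr1 (fun M : 'M[K]_(N.+1 * n) => M (mxtens_index (ord0, a)) (mxtens_index (ord0, b))) H.
by rewrite tensmxE !mxE mul1r.
Qed.

Lemma minpoly_tens (K : fieldType) N n (A : 'M[K]_n) : (0 < N)%N -> (0 < n)%N ->
  minpoly ((1%:M : 'M[K]_N) *t A) = minpoly A.
Proof.
move=> N0 n0.
have Nn0 : (0 < N * n)%N by rewrite muln_gt0 N0.
have [m1 r1 d1] := minpoly_spec ((1%:M : 'M[K]_N) *t A) Nn0.
have [m2 r2 d2] := minpoly_spec A n0.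
apply/eqP; rewrite -eqp_monic // /eqp; apply/andP; split.
- by apply: d1; rewrite peval_tens1 r2 tensmx0.
- by apply: d2; apply: (tens1_eq0 N0); rewrite -peval_tens1.
Qed.

Lemma cplx_tens1 (R : realType) N n (A : 'M[R]_n) :
  cplx_mx ((1%:M : 'M[R]_N) *t A) = (1%:M : 'M_N) *t cplx_mx A.
Proof.
rewrite /cplx_mx (map_mxT (real_complex R)).
by congr (_ *t _); apply/matrixP => a b; rewrite !mxE rmorphMn /= rmorph1.
Qed.

Lemma blk_cplx (R : realType) N n (x : 'cV[R]_(N * n)) i :
  blk (cplx_mx x) i = cplx_mx (blk x i).
Proof. by apply/matrixP => a b; rewrite !mxE. Qed.

Lemma lap_sum (R : realType) N (e : rel 'I_N) (w : 'I_N -> R) i :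
  \sum_j laplacian R e i j * w j = \sum_j (e j i)%:R * (w i - w j).
Proof.
under eq_bigr => j _ do rewrite !mxE mulrBl.
under [RHS]eq_bigr => j _ do rewrite mulrBr.
rewrite !sumrB; congr (_ - _).
rewrite (bigD1 i) //= big1 => [|j /negbTE Hj]; last by rewrite eq_sym Hj mulr0n mul0r.
rewrite eqxx mulr1n addr0 /indeg mulr_suml; apply: eq_bigr => j _.
by rewrite !mxE.
Qed.

Lemma cons_le (R : realType) N (e : rel 'I_N) (w : 'I_N -> R) (r : 'I_N)
  (par : 'I_N -> 'I_N) :
  (forall i, i != r -> e (par i) i) -> (forall i, exists k, iter k par i = r) ->
  (forall i, \sum_j (e j i)%:R * (w i - w j) = 0) ->
  forall i, w i <= w r.
Proof.
move=> Hpar Hk Hs.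
case: (@arg_maxP _ R _ r xpredT w isT) => i0 _ Hi0 i.
have step : forall j, (forall l, w l <= w j) -> j != r -> w (par j) = w j.
  move=> j Hj Hjr.
  have nn : forall l, xpredT l -> 0 <= (e l j)%:R * (w j - w l).
    by move=> l _; rewrite mulr_ge0 ?ler0n // subr_ge0.
  have := @psumr_eq0P _ _ xpredT (fun l => (e l j)%:R * (w j - w l)) nn (Hs j) (par j) isT.
  rewrite /= Hpar // mul1r => /eqP; rewrite subr_eq0 => /eqP ->//.
suff : forall k j, (forall l, w l <= w j) -> iter k par j = r -> w j = w r.
  have [k Hk0] := Hk i0 => /(_ k i0 (fun l => Hi0 l isT) Hk0) <-.
  exact: Hi0.
elim => [|k IH] j Hj; first by move=> /= ->.
rewrite iterSr.
case: (eqVneq j r) => [-> //|Hjr] Hit.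
rewrite -(step j Hj Hjr); apply: IH => //.
by move=> l; rewrite (step j Hj Hjr).
Qed.

Lemma consensus (R : realType) N (e : rel 'I_N) (w : 'I_N -> R) (r : 'I_N)
  (par : 'I_N -> 'I_N) :
  (forall i, i != r -> e (par i) i) -> (forall i, exists k, iter k par i = r) ->
  (forall i, \sum_j laplacian R e i j * w j = 0) ->
  forall i, w i = w r.
Proof.
move=> Hpar Hk Hs i; apply/eqP; rewrite eq_le.
rewrite (cons_le Hpar Hk) //=; last by move=> l; rewrite -lap_sum.
have H2 : forall l, \sum_j (e j l)%:R * ((fun j => - w j) l - (fun j => - w j) j) = 0.
  move=> l /=; have := Hs l; rewrite lap_sum => H.
  rewrite (eq_bigr (fun j => - ((e j l)%:R * (w l - w j)))) => [|j _].
    by rewrite sumrN H oppr0.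
  by rewrite -mulrN; congr (_ * _); rewrite opprB opprK addrC.
by have := @cons_le R N e (fun j => - w j) r par Hpar Hk H2 i; rewrite /= lerN2.
Qed.

Lemma unidx1 N n (j : 'I_N) (c : 'I_n) :
  Ordinal (@mxtens_index_proof1 N n (mxtens_index (j, c))) = j.
Proof. exact: (congr1 fst (mxtens_indexK (j, c))). Qed.

Lemma unidx2 N n (j : 'I_N) (c : 'I_n) :
  Ordinal (@mxtens_index_proof2 N n (mxtens_index (j, c))) = c.
Proof. exact: (congr1 snd (mxtens_indexK (j, c))). Qed.

Lemma blockdiag_blk (R : pzRingType) N n (m : 'I_N -> nat)
  (Cs : forall i : 'I_N, 'M[R]_(m i, n)) (y : 'cV[R]_(N * n)) i :
  blockdiag Cs *m y = 0 -> Cs i *m blk y i = 0.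
Proof.
move=> H; have := congr1 (fun M => submxcol M i) H.
rewrite /blockdiag mxcol_mul mxcolK submxcol0 => E; rewrite -E.
apply/matrixP => a b; rewrite [RHS]mxE sum_tens.
rewrite (bigD1 i) //= [X in _ + X]big1 => [|j Hj]; last first.
  apply: big1 => c _; by rewrite !mxE (unidx1 j c) ifN // mul0r.
rewrite addr0 mxE; apply: eq_bigr => c _.
by rewrite !mxE unidx1 unidx2 eqxx [b]ord1.
Qed.

Unset Implicit Arguments.
Set Strict Implicit.

Theorem corollary1 (R : realType) (n N p : nat) (m : 'I_N -> nat)
    (A : 'M[R]_n) (Cs : forall i : 'I_N, 'M[R]_(m i, n)) (H : 'M[R]_(p, n))
    (e : rel 'I_N) :
  observable H A ->
  no_self_loops e ->
  has_spanning_tree e ->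
  (forall x : 'cV[R]_n, (forall i : 'I_N, undetectable (Cs i) A x) -> x = 0) ->
  detectable (col_mx (blockdiag Cs) (laplacian R e *t H))
             ((1%:M : 'M[R]_N) *t A).
Proof.
move=> Hobs _ [r [par [Hpar Hk]]] Hint x [Hl Ha].
have N0 : (0 < N)%N by apply: leq_ltn_trans (ltn_ord r).
case: (posnP n) => [n0|n0].
  by apply: blk_eq0 => j; apply/matrixP => a; exfalso; move: (ltn_ord a); move: (nat_of_ord a) => k; rewrite n0.
have lNn : forall l, (l < n)%N -> (l < N * n)%N.
  by move=> l hl; apply: leq_trans hl (leq_pmull n N0).
have Hsplit : forall l, (l < n)%N ->
   blockdiag Cs *m (((1%:M : 'M_N) *t A ^+ l) *m x) = 0 /\
   (laplacian R e *t (H *m A ^+ l)) *m x = 0.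
  move=> l hl; have := Hl l (lNn l hl).
  rewrite tens1_exp -mulmxA mul_col_mx => /eqP; rewrite col_mx_eq0 => /andP [/eqP H1 /eqP H2].
  by split => //; rewrite mulmxA tensmx_mul mulmx1 in H2.
pose z := (laplacian R e *t (1%:M : 'M_n)) *m x.
have Hz : forall i, blk z i = 0.
  move=> i; apply: Hobs => l hl.
  rewrite -blk_tens1 /z mulmxA tensmx_mul mul1mx mulmx1.
  by have [_ ->] := Hsplit l hl; rewrite blk0.
have Hcons : forall j, blk x j = blk x r.
  move=> j; apply/matrixP => c b; rewrite [b]ord1.
  have := @consensus R N e (fun j => blk x j c 0) r par Hpar Hk; apply.
  move=> i; have := congr1 (fun M : 'cV[R]_n => M c 0) (Hz i).
  rewrite blk_tens summxE => E; rewrite mxE in E; rewrite -[RHS]E; apply: eq_bigr => k _.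
  by rewrite mul1mx [RHS]mxE.
have Hap : alpha_plus ((1%:M : 'M[R]_N) *t A) = alpha_plus A.
  by rewrite /alpha_plus /minpoly_roots /minpolyC minpoly_tens.
apply: blk_eq0 => j; rewrite Hcons; apply: Hint => i; rewrite -(Hcons i); split.
  move=> l hl; have [H1 _] := Hsplit l hl.
  by rewrite -mulmxA -blk_tens1; apply: blockdiag_blk.
have := congr1 (fun M => blk M i) Ha.
by rewrite /= Hap cplx_tens1 peval_tens1 blk_tens1 blk_cplx blk0.
Qed.
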